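(* For all $A,r\in\mathbb{N}$ and $\varepsilon>0$ there exists $N\in\mathbb{N}$ such that the following holds. Let $n_1,\ldots,n_r$ be positive integers with $n_i\leq An_j$ for all $i,j$ and $n=n_1+\cdots+n_r\geq N$; let $\Lambda=(\lambda_{i,j})$ be a symmetric non-negative $r\times r$ matrix that is $\varepsilon$-separated; let $p_{i,j}=\lambda_{i,j}/\sqrt{n_in_j}$, $M_{i,j}=p_{i,j}n_j$, and suppose $\rho(M)\geq 1+\varepsilon$. Let $Q=((n_j-n^{0.999})p_{i,j})_{i,j\in[r]}$. Then $\rho(Q)\geq 1+\varepsilon/2$; in particular, for every non-zero initial configuration $x$, the Galton–Watson process $\mathrm{GW}(\vec n-n^{0.999}\vec 1,P,x)$ is super-critical.
   Context: $\rho(\cdot)$ denotes the largest eigenvalue. $\Lambda$ is $\varepsilon$-separated if for all $i,j$ either $\lambda_{i,j}=0$ or $\varepsilon\leq\lambda_{i,j}\leq 1/\varepsilon$. $\mathrm{GW}(\vec m,P,x)$ is the multi-type Galton–Watson process in which each individual of type $i$ has, independently for each $j$, a $\mathrm{Binomial}(m_j,p_{i,j})$ number of children of type $j$; its mean offspring matrix is $(m_jp_{i,j})_{i,j}$, and it is called super-critical when the largest eigenvalue of this matrix exceeds $1$. *)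

(* Defs.v *)
From HB Require Import structures.
From mathcomp Require Import all_boot all_order all_algebra.
From mathcomp Require Import classical_sets reals exp.
Set Implicit Arguments. Unset Strict Implicit. Unset Printing Implicit Defensive.
Import Order.TTheory GRing.Theory Num.Theory.
Local Open Scope ring_scope.
Local Open Scope classical_set_scope.

Definition rho (R : realType) (k : nat) (B : 'M[R]_k) : R :=
  sup [set a : R | eigenvalue B a].

Definition eps_separated (R : realType) (k : nat) (eps : R) (L : 'M[R]_k) : Prop :=
  forall i j, L i j = 0 \/ (eps <= L i j /\ L i j <= eps^-1).

Definition pmat (R : realType) (k : nat) (nn : 'I_k -> nat) (L : 'M[R]_k) : 'M[R]_k :=
  \matrix_(i, j) (L i j / Num.sqrt ((nn i)%:R * (nn j)%:R)).

(* mean offspring matrix (m_j p_{i,j})_{i,j} of GW(m, P, x) *)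
Definition GW_mean (R : realType) (k : nat) (m : 'I_k -> R) (P : 'M[R]_k) : 'M[R]_k :=
  \matrix_(i, j) (m j * P i j).

(* GW(m, P, x) is super-critical (independent of the nonzero initial config x) *)
Definition GW_supercritical (R : realType) (k : nat) (m : 'I_k -> R) (P : 'M[R]_k) : Prop :=
  1 < rho (GW_mean m P).

(* Main.v *)
Require Import Defs.
From HB Require Import structures.
From mathcomp Require Import all_boot all_order all_algebra.
From mathcomp Require Import classical_sets boolp reals exp topology normedtype derive.
From mathcomp Require Import ring lra.
Set Implicit Arguments. Unset Strict Implicit. Unset Printing Implicit Defensive.
Import Order.TTheory GRing.Theory Num.Theory.
Import numFieldTopology.Exports numFieldNormedType.Exports.
Local Open Scope ring_scope.
Local Open Scope classical_set_scope.

Section KL.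
Variable R : realType.

Definition qf k (B : 'M[R]_k) (v : 'rV[R]_k) : R := (v *m B *m v^T) 0 0.

Lemma qf_sum k (B : 'M[R]_k) v :
  qf B v = \sum_i \sum_j v 0 i * B i j * v 0 j.
Proof.
rewrite /qf mxE; under eq_bigr => j _ do rewrite !mxE big_distrl /=.
by rewrite exchange_big.
Qed.

Lemma cont_sum (T : topologicalType) (I : Type) (s : seq I) (F : I -> T -> R) :
  (forall i, continuous (F i)) -> continuous (fun x => \sum_(i <- s) F i x).
Proof.
move=> hF; elim: s => [|a s IH].
  have -> : (fun x => \sum_(i <- [::]) F i x) = fun=> 0.
    by apply: funext => y; rewrite big_nil.
  exact: cst_continuous.
have -> : (fun x => \sum_(i <- a :: s) F i x) =
   (fun x => F a x + \sum_(i <- s) F i x).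
  by apply: funext => y; rewrite big_cons.
move=> x; exact: (@cvgD _ _ _ _ _ (F a) (fun x => \sum_(i <- s) F i x) _ _ (hF a x) (IH x)).
Qed.

Lemma cont_mul (T : topologicalType) (f g : T -> R) :
  continuous f -> continuous g -> continuous (fun x => f x * g x).
Proof. by move=> cf cg x; exact: (cvgM (cf x) (cg x)). Qed.

Lemma qf_cont k (B : 'M[R]_k) : continuous (qf B).
Proof.
have -> : qf B = fun v => \sum_i \sum_j v 0 i * B i j * v 0 j.
  by apply: funext => v; rewrite qf_sum.
apply: cont_sum => i; apply: cont_sum => j.
apply: cont_mul; last exact: coord_continuous.
apply: cont_mul; first exact: coord_continuous.
exact: cst_continuous.
Qed.

Lemma qfZ k (B : 'M[R]_k) a v : qf B (a *: v) = a ^+ 2 * qf B v.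
Proof.
by rewrite /qf linearZ /= -!scalemxAl -scalemxAr !mxE mulrA expr2.
Qed.

Lemma qf0 k (B : 'M[R]_k) : qf B 0 = 0.
Proof. by rewrite /qf !mul0mx mxE. Qed.

Definition dmx k (d : 'I_k -> R) : 'M[R]_k := diag_mx (\row_j d j).

Lemma qfD k (d : 'I_k -> R) v : qf (dmx d) v = \sum_j d j * v 0 j ^+ 2.
Proof.
rewrite /qf mul_mx_diag mxE; apply: eq_bigr => j _; rewrite !mxE.
by rewrite expr2 mulrA [v 0 j * d j]mulrC.
Qed.

Lemma nz_row k (v : 'rV[R]_k) : v != 0 -> exists j, v 0 j != 0.
Proof.
move=> vn0; apply/not_existsP => H; move/eqP: vn0; apply.
apply/rowP => j; rewrite mxE; apply/eqP; apply/negPn/negP => h; exact: (H j).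
Qed.

Lemma qfD_gt0 k (d : 'I_k -> R) v : (forall j, 0 < d j) -> v != 0 ->
  0 < qf (dmx d) v.
Proof.
move=> dp /nz_row [j vj]; rewrite qfD (bigD1 j) //=.
apply: (@lt_le_trans _ _ (d j * v 0 j ^+ 2)).
  by rewrite mulr_gt0 // exprn_even_gt0.
rewrite lerDl sumr_ge0 // => i _; rewrite mulr_ge0 // ?sqr_ge0 ?ltW //.
Qed.

Lemma qfD_ge0 k (d : 'I_k -> R) v : (forall j, 0 < d j) -> 0 <= qf (dmx d) v.
Proof.
move=> dp; rewrite qfD sumr_ge0 // => i _; rewrite mulr_ge0 // ?sqr_ge0 ?ltW //.
Qed.

Lemma normalize k (d : 'I_k -> R) v : (forall j, 0 < d j) -> v != 0 ->
  qf (dmx d) ((Num.sqrt (qf (dmx d) v))^-1 *: v) = 1.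
Proof.
move=> dp vn0; have g0 := qfD_gt0 dp vn0.
rewrite qfZ exprVn sqr_sqrtr ?ltW // mulVf //; exact: lt0r_neq0.
Qed.

Lemma box_of k (d : 'I_k -> R) v : (forall j, 0 < d j) -> qf (dmx d) v = 1 ->
  forall i, `[- (1 + \sum_j (d j)^-1), 1 + \sum_j (d j)^-1] (v 0 i).
Proof.
move=> dp h i; set b := 1 + _.
have hb : (d i)^-1 <= b - 1.
  rewrite /b addrAC subrr add0r (bigD1 i) //= lerDl sumr_ge0 // => j _.
  by rewrite invr_ge0 ltW.
have hv : d i * v 0 i ^+ 2 <= 1.
  rewrite -h qfD (bigD1 i) //= lerDl sumr_ge0 // => j _.
  by rewrite mulr_ge0 // ?sqr_ge0 ?ltW.
have hv2 : v 0 i ^+ 2 <= b.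
  have : v 0 i ^+ 2 <= (d i)^-1.
    by rewrite -(ler_pM2l (dp i)) mulrV ?unitfE ?lt0r_neq0.
  move=> h2; apply: (le_trans h2); lra.
have b1 : 1 <= b by rewrite /b lerDl sumr_ge0 // => j _; rewrite invr_ge0 ltW.
rewrite /= in_itv /=; apply/andP; split; nra.
Qed.



Lemma qf_add k (B : 'M[R]_k) x y :
  qf B (x + y) = qf B x + (x *m B *m y^T) 0 0 + (y *m B *m x^T) 0 0 + qf B y.
Proof.
rewrite /qf linearD /= !(mulmxDl, mulmxDr).
have addE (A C : 'M[R]_1) : (A + C) 0 0 = A 0 0 + C 0 0 by rewrite mxE.
rewrite !addE; ring.
Qed.

Lemma cross_scale k (B : 'M[R]_k) (x y : 'rV[R]_k) t :
  (x *m B *m (t *: y)^T) 0 0 = t * (x *m B *m y^T) 0 0 /\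
  ((t *: y) *m B *m x^T) 0 0 = t * (y *m B *m x^T) 0 0.
Proof.
split; first by rewrite linearZ /= -scalemxAr mxE.
by rewrite -!scalemxAl mxE.
Qed.

Lemma psd_ker k (B : 'M[R]_k) c : B^T = B -> (forall v, 0 <= qf B v) ->
  qf B c = 0 -> c *m B = 0.
Proof.
move=> sB psd qc.
set y := c *m B.
have X2 : (y *m B *m c^T) 0 0 = (y *m y^T) 0 0.
  by rewrite [in RHS]/y [in RHS]trmx_mul sB mulmxA.
set s := (y *m y^T) 0 0.
have s_sum : s = \sum_j y 0 j ^+ 2.
  by rewrite /s mxE; apply: eq_bigr => j _; rewrite [y^T _ _]mxE expr2.
have s0 : 0 <= s by rewrite s_sum sumr_ge0 // => j _; rewrite sqr_ge0.
set e := qf B y.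
have e0 : 0 <= e := psd y.
have H t : 0 <= 2 * t * s + t ^+ 2 * e.
  have := psd (c + t *: y).
  rewrite qf_add qfZ qc.
  have [-> ->] := cross_scale B c y t.
  by rewrite X2 -/s -/e; congr (_ <= _); rewrite /s; ring.
have ss : s = 0.
  pose t := - s / (e + 1).
  have e1 : 0 < e + 1 by lra.
  have ht : t * (e + 1) = - s by rewrite /t mulrAC -mulrA mulfV ?mulr1 // lt0r_neq0.
  have H2 : 0 <= (e + 1) ^+ 2 * (2 * t * s + t ^+ 2 * e).
    by rewrite mulr_ge0 // sqr_ge0.
  have H3 : (e + 1) ^+ 2 * (2 * t * s + t ^+ 2 * e) =
     2 * (t * (e + 1)) * s * (e + 1) + (t * (e + 1)) ^+ 2 * e by ring.
  rewrite H3 ht in H2.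
  nra.
have : forall j, y 0 j ^+ 2 = 0.
  move=> j; move: ss; rewrite s_sum => /eqP; rewrite psumr_eq0 => [/allP h|j' _].
    by apply/eqP; apply: (h j); rewrite mem_index_enum.
  exact: sqr_ge0.
move=> h; apply/rowP => j; rewrite [in RHS]mxE.
by have /eqP := h j; rewrite sqrf_eq0 => /eqP.
Qed.


Lemma KL k (P : 'M[R]_k) (d : 'I_k -> R) (u : 'rV[R]_k) (theta : R) :
  P^T = P -> (forall j, 0 < d j) -> u != 0 ->
  theta * qf (dmx d) u <= qf P u ->
  exists2 a, theta <= a & exists2 c : 'rV[R]_k, c != 0 & c *m P = a *: (c *m dmx d).
Proof.
move=> sP dp un0 hu.
set D := dmx d.
set b := 1 + \sum_j (d j)^-1.
pose box := [set v : 'rV[R]_k | forall i, `[- b, b]%classic (v ord0 i)].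
pose K := box `&` (qf D @^-1` [set 1]).
have cK : compact K.
  apply: compact_closedI.
    by apply: (@rV_compact _ _ (fun=> `[- b, b]%classic)) => _; exact: segment_compact.
  apply: preimage_closed; first by move=> x _; exact: qf_cont.
  exact: closed_eq.
have normK v : v != 0 -> K ((Num.sqrt (qf D v))^-1 *: v).
  move=> vn0; have h1 := normalize dp vn0.
  split; last exact: h1.
  move=> i; exact: (box_of dp h1 i).
have K0 : K !=set0 by eexists; exact: normK un0.
have [c cK' cmax] := EVT_max_rV K0 cK (continuous_subspaceT (qf_cont (B:=P))).
have {cK'} cK' : K c by rewrite inE in cK'.
have qc : qf D c = 1 by case: cK'.
set lam := qf P c.
have bound v : qf P v <= lam * qf D v.
  have [->|vn0] := eqVneq v 0; first by rewrite !qf0 mulr0.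
  have := cmax _ (mem_set (normK v vn0)); rewrite qfZ -/lam.
  have g0 : 0 < qf D v := qfD_gt0 dp vn0.
  rewrite exprVn (sqr_sqrtr (ltW g0)) => h.
  have := ler_wpM2l (ltW g0) h.
  by rewrite mulrA mulfV ?mul1r ?(lt0r_neq0 g0) // mulrC.
exists lam.
  have g0 := qfD_gt0 dp un0.
  by rewrite -(ler_pM2r g0); exact: le_trans hu (bound u).
exists c.
  by apply/eqP => c0; move: qc; rewrite c0 qf0 => /eqP; rewrite eq_sym oner_eq0.
set B := lam *: D - P.
have sB : B^T = B by rewrite /B linearB /= linearZ /= sP /D tr_diag_mx.
have subE (X Y : 'M[R]_1) : (X - Y) 0 0 = X 0 0 - Y 0 0 by rewrite !mxE.
have scaleE a (X : 'M[R]_1) : (a *: X) 0 0 = a * X 0 0 by rewrite !mxE.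
have qB v : qf B v = lam * qf D v - qf P v.
  by rewrite /qf /B mulmxBr mulmxBl -scalemxAr -scalemxAl subE scaleE.
have psd v : 0 <= qf B v by rewrite qB subr_ge0.
have qBc : qf B c = 0 by rewrite qB qc mulr1 subrr.
have := psd_ker sB psd qBc.
rewrite /B mulmxBr -scalemxAr => /eqP; rewrite subr_eq0 => /eqP ->.
by [].
Qed.

End KL.

Lemma eig_bound (R : realType) k (B : 'M[R]_k) a :
  eigenvalue B a -> a <= \sum_i \sum_j `|B i j|.
Proof.
move=> /eigenvalueP [v hv vn0]; have [j0 vj0] := nz_row vn0.
case: (@arg_maxP _ _ 'I_k j0 xpredT (fun i => `|v 0 i|) isT) => i0 _ hmax.
have vi0 : 0 < `|v 0 i0|.
  by apply: (lt_le_trans _ (hmax j0 isT)); rewrite normr_gt0.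
have ent : a * v 0 i0 = \sum_j v 0 j * B j i0.
  have := congr1 (fun M : 'rV[R]_k => M 0 i0) hv; rewrite !mxE => <-.
  by apply: eq_bigr => j _.
have h1 : `|a| * `|v 0 i0| <= `|v 0 i0| * \sum_j `|B j i0|.
  rewrite -normrM ent mulr_sumr.
  apply: (le_trans (ler_norm_sum _ _ _)); apply: ler_sum => j _.
  by rewrite normrM; apply: ler_wpM2r => //; exact: hmax.
have h2 : \sum_j `|B j i0| <= \sum_i \sum_j `|B i j|.
  apply: ler_sum => i _; rewrite (bigD1 i0) //= lerDl.
  by apply: sumr_ge0 => j _.
have h3 : `|a| <= \sum_j `|B j i0|.
  by rewrite -(ler_pM2r vi0); apply: (le_trans h1); rewrite mulrC.
exact: le_trans (ler_norm a) (le_trans h3 h2).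
Qed.

Lemma GW_mean_mul (R : realType) k (m : 'I_k -> R) (P : 'M[R]_k) :
  GW_mean m P = P *m dmx m.
Proof. by apply/matrixP => i j; rewrite /dmx mul_mx_diag !mxE mulrC. Qed.

Lemma rho_ge (R : realType) k (B : 'M[R]_k) a : eigenvalue B a -> a <= rho B.
Proof.
move=> ea; apply: sup_upper_bound => //; split; first by exists a.
by exists (\sum_i \sum_j `|B i j|) => x /= /eig_bound.
Qed.

Lemma rho_adh (R : realType) k (B : 'M[R]_k) e : 0 < e -> 0 < rho B ->
  exists2 a, eigenvalue B a & rho B - e < a.
Proof.
move=> e0 r0.
have hs : has_sup [set a | eigenvalue B a].
  apply: contrapT => /sup_out h; move: r0; rewrite /rho h ltxx //.
have [a ha ha2] := sup_adherent e0 hs.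
by exists a.
Qed.

Theorem claim3p2 (R : realType) (A r : nat) (eps : R) :
  0 < eps ->
  exists N : nat,
    forall (nn : 'I_r -> nat) (L : 'M[R]_r),
      (forall i, (0 < nn i)%N) ->
      (forall i j, (nn i <= A * nn j)%N) ->
      (N <= \sum_(i < r) nn i)%N ->
      L^T = L ->
      (forall i j, 0 <= L i j) ->
      eps_separated eps L ->
      1 + eps <= rho (GW_mean (fun j => (nn j)%:R) (pmat nn L)) ->
      let n := (\sum_(i < r) nn i)%N in
      let m := fun j => (nn j)%:R - powR (n%:R) (999%:R / 1000%:R) in
      1 + eps / 2 <= rho (GW_mean m (pmat nn L))
      /\ GW_supercritical m (pmat nn L).
Proof.
move=> eps0.
pose del := eps / (4 * (1 + eps)).
have del0 : 0 < del by rewrite /del divr_gt0 // mulr_gt0 //; lra.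
have hdel : del * (1 + eps) = eps / 4.
  rewrite /del; field; rewrite gt_eqF //; lra.
have del1 : del < 1 by nra.
pose K0 : R := (r * A)%:R / del.
have K00 : 0 <= K0 by rewrite /K0 divr_ge0 // ltW.
exists (Num.bound (K0 ^+ 1000)).
move=> nn L npos hA hN sL L0 Lsep hrho n m.
set P := pmat nn L.
have sP : P^T = P.
  apply/matrixP => i j; rewrite !mxE.
  have := congr1 (fun M : 'M[R]_r => M j i) sL; rewrite mxE => ->.
  by rewrite [(nn i)%:R * _]mulrC.
pose c : R := powR (n%:R : R) (999%:R / 1000%:R).
have mE j : m j = (nn j)%:R - c by [].
have c0 : 0 <= c by rewrite powR_ge0.
have key j : c <= del * (nn j)%:R.
  have hn : (n <= r * A * nn j)%N.
    apply: (@leq_trans (\sum_(i < r) A * nn j)).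
      by apply: leq_sum => i _; exact: hA.
    by rewrite sum_nat_const card_ord mulnA.
  have hnj : (nn j <= n)%N by rewrite /n (bigD1 j) //= leq_addr.
  have n0 : (0 < n)%N by apply: leq_trans (npos j) hnj.
  have nR0 : 0 < n%:R :> R by rewrite ltr0n.
  have A0 : (0 < A)%N.
    rewrite lt0n; apply/eqP => Az; have := hA j j; rewrite Az mul0n leqn0 => /eqP h; by move: (npos j); rewrite h.
  have r0 : (0 < r)%N by apply: leq_ltn_trans (leq0n j) (ltn_ord j).
  have rA0 : 0 < (r * A)%:R :> R by rewrite ltr0n muln_gt0 r0 A0.
  pose t := n%:R `^ (1000%:R^-1) : R.
  have t0 : 0 <= t by rewrite powR_ge0.
  have ct : c * t = n%:R.
    rewrite /c /t -powRD; last by apply/implyP => _; rewrite pnatr_eq0 -lt0n.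
    have -> : 999%:R / 1000%:R + 1000%:R^-1 = 1 :> R.
      by field.
    by rewrite powRr1 // ltW.
  have tpow : t ^+ 1000 = n%:R.
    rewrite -powR_mulrn // -powRrM mulVf ?pnatr_eq0 // powRr1 //; exact: ltW.
  have Kt : K0 < t.
    rewrite -(@ltr_pXn2r _ 1000) ?nnegrE // tpow.
    apply: (lt_le_trans (archi_boundP _)); first by rewrite exprn_ge0.
    by rewrite ler_nat.
  have h1 : (r * A)%:R < del * t.
    by move: Kt; rewrite /K0 ltr_pdivrMr // mulrC.
  have h2 : n%:R <= (r * A)%:R * (nn j)%:R :> R by rewrite -natrM ler_nat.
  nra.
have mpos j : 0 < m j.
  have := key j; have := npos j; rewrite -(ltr0n R) mE => h; nra.
have mge j : (1 - del) * (nn j)%:R <= m j.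
  have := key j; rewrite mE => h; nra.
have rpos : 0 < rho (GW_mean (fun j => (nn j)%:R) P) by lra.
have e40 : 0 < eps / 4 by lra.
have [mu emu hmu] := rho_adh e40 rpos.
move: emu; rewrite GW_mean_mul => /eigenvalueP [v hv vn0].
have hvj j : (v *m P) 0 j * (nn j)%:R = mu * v 0 j.
  have := congr1 (fun M : 'rV[R]_r => M 0 j) hv.
  rewrite mulmxA /dmx mul_mx_diag.
  rewrite [X in X = _ -> _]mxE [(\row_ _ _) 0 j]mxE [(mu *: v) 0 j]mxE.
  by [].
have qfP : qf P v = \sum_j mu * v 0 j ^+ 2 / (nn j)%:R.
  rewrite /qf mxE; apply: eq_bigr => j _; rewrite [v^T _ _]mxE.
  have nj0 : (nn j)%:R != 0 :> R by rewrite pnatr_eq0 -lt0n npos.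
  rewrite -[(v *m P) 0 j](mulfK nj0) hvj.
  by rewrite expr2; field.
have dpos : forall j, 0 < (m j)^-1 by move=> j; rewrite invr_gt0.
have hineq : (1 - del) * mu * qf (dmx (fun j => (m j)^-1)) v <= qf P v.
  rewrite qfD qfP mulr_sumr; apply: ler_sum => j _.
  have nj0 : 0 < (nn j)%:R :> R by rewrite ltr0n.
  have f : (1 - del) / m j <= (nn j)%:R^-1.
    by rewrite ler_pdivrMr // ler_pdivlMl // mulrC.
  have mu0 : 0 <= mu by lra.
  have e1 : (1 - del) * mu * ((m j)^-1 * v 0 j ^+ 2) =
     (mu * v 0 j ^+ 2) * ((1 - del) / m j) by ring.
  rewrite e1; apply: ler_wpM2l => //.
  by rewrite mulr_ge0 // sqr_ge0.
have [a ha [cv cvn0 hc]] := KL sP dpos vn0 hineq.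
have ea : eigenvalue (GW_mean m P) a.
  rewrite GW_mean_mul; apply/eigenvalueP; exists cv => //.
  rewrite mulmxA hc -scalemxAl; congr (_ *: _).
  apply/rowP => j; rewrite /dmx !mul_mx_diag !mxE.
  by rewrite mulfVK // gt_eqF.
have fin : 1 + eps / 2 <= (1 - del) * mu by nra.
have hQ : 1 + eps / 2 <= rho (GW_mean m P).
  exact: le_trans fin (le_trans ha (rho_ge ea)).
split => //.
rewrite /GW_supercritical; apply: lt_le_trans hQ; lra.
Qed.
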